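(* Suppose $EAE(V)<\infty$. Then the condition ''$\mathbb{E}[V(yZ_T^0)]<\infty$ for all $y>0$'' holds if and only if $u(x,U)<\infty$ for some $x>0$.
   Context: Fix $T>0$ and a filtered probability space $(\Omega,\mathcal F,(\mathcal F_t)_{0\le t\le T},\mathbf P)$ satisfying the usual conditions. Fix $0<\lambda<1$ and a strictly positive càdlàg adapted stock price $S$. A $\lambda$-consistent price system is a strictly positive process $Z=(Z^0,Z^1)$ with $Z^0_0=1$, $Z^0$ a $\mathbf P$-martingale, $Z^1$ a $\mathbf P$-local martingale, and $Z^1_t/Z^0_t\in[(1-\lambda)S_t,S_t]$ a.s. for all $t$. Standing assumption: one such $Z$ is fixed. Following the paper, $\mathcal C(x)=\{f\in L^0_+(\mathbf P):\mathbb{E}[Z_T^0 f]\le x\}$ for $x>0$. A utility is a function $U:(0,\infty)\to\mathbb R$ that is non-constant, increasing, upper semicontinuous, with $U(\infty):=\lim_{x\to\infty}U(x)>0$ and $\lim_{x\to\infty}U(x)/x=0$; $U$ need not be concave. Set $U(0):=\lim_{x\downarrow0}U(x)$. For $f\ge0$, $\mathbb{E}[U(f)]:=-\infty$ if $U^-(f)\notin L^1$. The value function is $u(x,U):=\sup\{\mathbb{E}[U(f)]:f\in\mathcal C(x)\}$. The convex conjugate is $V(y):=\sup_{x>0}\{U(x)-xy\}$ (a convex, decreasing function finite on $(0,\infty)$), $\partial V(y)$ denotes its subdifferential at $y$, and the extended asymptotic elasticity is $EAE(V):=\limsup_{y\to0}\sup_{q\in\partial V(y)}\frac{|q|\,y}{V(y)}$.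 *)

(* Defs.v *)
From HB Require Import structures.
From mathcomp Require Import all_boot all_order all_algebra.
From mathcomp Require Import all_classical all_reals all_analysis.
Set Implicit Arguments. Unset Strict Implicit. Unset Printing Implicit Defensive.
Import Order.TTheory GRing.Theory Num.Theory.
Import numFieldNormedType.Exports.
Local Open Scope classical_set_scope.
Local Open Scope ring_scope.

Section Defs.
Context {R : realType} {d : measure_display} {Omega : measurableType d}.
Variable P : probability Omega R.

Definition filtration (T : R) (F : R -> set (set Omega)) : Prop :=
  (forall t, 0 <= t <= T -> sigma_algebra setT (F t) /\ F t `<=` measurable) /\
  (forall s t, 0 <= s -> s <= t -> t <= T -> F s `<=` F t).

Definition usual_conditions (T : R) (F : R -> set (set Omega)) : Prop :=
  filtration T F /\
  (forall N A, measurable N -> P N = 0%E -> A `<=` N -> F 0 A) /\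
  (forall t, 0 <= t < T ->
     forall A, (forall s, t < s <= T -> F s A) -> F t A).

Definition adapted (T : R) (F : R -> set (set Omega)) (X : R -> Omega -> R) :=
  forall t, 0 <= t <= T -> forall B : set R, measurable B -> F t (X t @^-1` B).

Definition cadlag (T : R) (X : R -> Omega -> R) :=
  forall w : Omega,
    (forall t, 0 <= t < T -> (fun s => X s w) @ at_right t --> X t w) /\
    (forall t, 0 < t <= T -> cvg ((fun s => X s w) @ at_left t)).

(** martingale on [0,T], stated without conditional expectations:
    E[X_t 1_A] = E[X_s 1_A] for s <= t and A in F_s. *)
Definition martingale (T : R) (F : R -> set (set Omega)) (X : R -> Omega -> R) :=
  adapted T F X /\
  (forall t, 0 <= t <= T -> P.-integrable setT (EFin \o X t)) /\
  (forall s t, 0 <= s -> s <= t -> t <= T -> forall A, F s A ->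
     (\int[P]_(w in A) (X t w)%:E = \int[P]_(w in A) (X s w)%:E)%E).

Definition stopping_time (T : R) (F : R -> set (set Omega))
  (tau : Omega -> \bar R) :=
  (forall w, (0 <= tau w)%E) /\
  (forall t, 0 <= t <= T -> F t [set w | (tau w <= t%:E)%E]).

Definition stopped (X : R -> Omega -> R) (tau : Omega -> \bar R) :
  R -> Omega -> R :=
  fun t w => match tau w with
             | r%:E => X (Num.min t r) w
             | _ => X t w
             end.

Definition local_martingale (T : R) (F : R -> set (set Omega))
  (X : R -> Omega -> R) :=
  adapted T F X /\
  exists tau : nat -> Omega -> \bar R,
    (forall n, stopping_time T F (tau n)) /\
    (forall n w, (tau n w <= tau n.+1 w)%E) /\
    {ae P, forall w, exists n, (T%:E <= tau n w)%E} /\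
    (forall n, martingale T F (fun t w => stopped X (tau n) t w - X 0 w)).

Definition consistent_price_system (T : R) (F : R -> set (set Omega))
  (lam : R) (S Z0 Z1 : R -> Omega -> R) : Prop :=
  (forall t w, 0 <= t <= T -> 0 < Z0 t w /\ 0 < Z1 t w) /\
  (forall w, Z0 0 w = 1) /\
  martingale T F Z0 /\
  local_martingale T F Z1 /\
  (forall t, 0 <= t <= T ->
     {ae P, forall w, (1 - lam) * S t w <= Z1 t w / Z0 t w <= S t w}).

Definition Cset (ZT : Omega -> R) (x : R) : set (Omega -> R) :=
  [set f : Omega -> R | measurable_fun setT f /\ (forall w, 0 <= f w) /\
           (\int[P]_w (ZT w * f w)%:E <= x%:E)%E].

End Defs.

Section Utility.
Context {R : realType}.

(** U : (0,oo) -> R is a utility (values at x <= 0 are irrelevant). *)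
Definition utility (U : R -> R) : Prop :=
  (exists x y : R, 0 < x /\ 0 < y /\ U x <> U y) /\
  (forall x y : R, 0 < x -> x <= y -> U x <= U y) /\
  (forall x : R, 0 < x -> forall e : R, 0 < e -> \forall z \near x, U z < U x + e) /\
  (0 < lim ((fun x : R => (U x)%:E) @ +oo%R))%E /\
  ((fun x : R => U x / x) @ +oo%R --> 0).

Definition Uext (U : R -> R) (x : R) : \bar R :=
  if 0 < x then (U x)%:E else lim ((fun z : R => (U z)%:E) @ 0^'+).

Definition conj_V (U : R -> R) (y : R) : R :=
  sup [set U x - x * y | x in `]0, +oo[%classic].

Definition subdiff (V : R -> R) (y : R) : set R :=
  [set q | forall z, 0 < z -> V y + q * (z - y) <= V z].

(** EAE(V) = limsup_{y -> 0+} sup_{q in dV(y)} |q| y / V(y). *)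
Definition EAE (V : R -> R) : \bar R :=
  ereal_inf [set ereal_sup
      [set ereal_sup [set (`|q| * y / V y)%:E | q in subdiff V y]
        | y in `]0, delta[%classic]
    | delta in `]0, +oo[%classic].

End Utility.

Section Value.
Context {R : realType} {d : measure_display} {Omega : measurableType d}.
Variable P : probability Omega R.

(** E[U(f)] for f >= 0, := -oo if U^-(f) is not integrable. *)
Definition EU (U : R -> R) (f : Omega -> R) : \bar R :=
  if (\int[P]_w ((fun w => Uext U (f w)) ^\- w) < +oo)%E
  then (\int[P]_w ((fun w => Uext U (f w)) ^\+ w)
        - \int[P]_w ((fun w => Uext U (f w)) ^\- w))%E
  else -oo%E.

Definition value_u (ZT : Omega -> R) (x : R) (U : R -> R) : \bar R :=
  ereal_sup [set EU U f | f in Cset P ZT x].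

(** "E[V(y Z_T^0)] < oo", read as: the positive part has finite expectation. *)
Definition EV_finite (U : R -> R) (ZT : Omega -> R) (y : R) : Prop :=
  (\int[P]_w (Num.max (conj_V U (y * ZT w)) 0)%:E < +oo)%E.

End Value.

(* Main.v *)
Require Import Defs.
From HB Require Import structures.
From mathcomp Require Import all_boot all_order all_algebra.
From mathcomp Require Import all_classical all_reals all_analysis.
From mathcomp Require Import measurable_realfun.
From mathcomp Require Import ring lra.
Import Order.TTheory GRing.Theory Num.Theory.
Import numFieldNormedType.Exports.
Local Open Scope classical_set_scope.
Local Open Scope ring_scope.

Module Aux.
Set Implicit Arguments. Unset Strict Implicit. Unset Printing Implicit Defensive.

Lemma le_eps (R : realType) (a b : R) :
  (forall e, 0 < e -> a <= b + e) -> a <= b.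
Proof.
move=> H; case: (leP a b) => // ba.
have h : 0 < (a - b) / 2 by lra.
have := H _ h; lra.
Qed.

Section VF.
Variables (R : realType) (U : R -> R).
Hypothesis Umono : forall x y : R, 0 < x -> x <= y -> U x <= U y.
Hypothesis Ulin : (fun x : R => U x / x) @ +oo%R --> (0:R).

Lemma Ulin_lt (c : R) : 0 < c -> exists M, forall x, M < x -> 0 < x -> U x < x * c.
Proof.
move=> c0; have := Ulin; move/cvgrPdist_lt => /(_ c c0) [M [_ HM]].
exists M => x Mx x0; have := HM x Mx; rewrite /= sub0r normrN => H.
have := le_lt_trans (ler_norm _) H.
by rewrite ltr_pdivrMr // mulrC.
Qed.

Definition Sy (y : R) := [set U x - x * y | x in `]0, +oo[%classic].

Lemma Sy_n0 y : Sy y !=set0.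
Proof. by exists (U 1 - 1 * y); exists 1 => //=; rewrite in_itv /= andbT. Qed.

Lemma Sy_ub y : 0 < y -> has_ubound (Sy y).
Proof.
move=> y0; have [M HM] := Ulin_lt y0.
set A := Num.max M 1.
have A0 : 0 < A by rewrite lt_max ltr01 orbT.
exists (Num.max (U A) 0) => _ [x /= + <-]; rewrite in_itv /= andbT => x0.
case: (leP x A) => xA.
  rewrite le_max; apply/orP; left.
  have := Umono x0 xA; have : 0 <= x * y by rewrite mulr_ge0 // ltW.
  move=> h1 h2; rewrite lerBlDr; apply: (le_trans h2); rewrite lerDl //.
rewrite le_max; apply/orP; right.
have Mx : M < x by apply: le_lt_trans xA; rewrite le_max lexx.
by rewrite subr_le0 ltW // HM.
Qed.

Lemma Sy_sup y : 0 < y -> has_sup (Sy y).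
Proof. by move=> y0; split; [exact: Sy_n0 | exact: Sy_ub]. Qed.

Lemma V_ge y x : 0 < y -> 0 < x -> U x - x * y <= conj_V U y.
Proof.
move=> y0 x0; rewrite /conj_V -/(Sy y).
have := sup_upper_bound (Sy_sup y0); apply.
by exists x => //=; rewrite in_itv /= andbT.
Qed.

Lemma V_adh y e : 0 < y -> 0 < e ->
  exists2 x, 0 < x & conj_V U y - e < U x - x * y.
Proof.
move=> y0 e0; rewrite /conj_V -/(Sy y).
have [_ [x /= + <-] H] := sup_adherent e0 (Sy_sup y0).
by rewrite in_itv /= andbT => x0; exists x.
Qed.

Lemma V_noninc y y' : 0 < y -> y <= y' -> conj_V U y' <= conj_V U y.
Proof.
move=> y0 yy; rewrite {1}/conj_V -/(Sy y'); apply: ge_sup; first exact: Sy_n0.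
move=> _ [x /= + <-]; rewrite in_itv /= andbT => x0.
apply: le_trans (V_ge y0 x0); rewrite lerB // ler_pM2l //.
Qed.


Lemma V_subdiff z : 0 < z -> exists q, subdiff (conj_V U) z q.
Proof.
move=> z0.
set V := conj_V U.
pose A e := [set x | 0 < x /\ V z - e <= U x - x * z].
pose a e := sup (A e).
have An0 e : 0 < e -> A e !=set0.
  by move=> e0; have [x x0 h] := V_adh z0 e0; exists x; split=> //; exact: ltW.
have Aub e : has_ubound (A e).
  have z20 : 0 < z / 2 by rewrite divr_gt0.
  have [M HM] := Ulin_lt z20.
  exists (Num.max M (2 * (e - V z) / z)) => x [x0 hx].
  rewrite le_max; case: (leP x M) => xM; first by apply/orP; left.
  apply/orP; right.
  have h := HM x xM x0.
  rewrite ler_pdivlMr //.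
  have : x * (z / 2) = x * z / 2 by rewrite mulrA.
  move=> e1; rewrite e1 in h; lra.
have Asup e : 0 < e -> has_sup (A e) by move=> e0; split; [exact: An0|exact: Aub].
have a_ge e x : 0 < e -> A e x -> x <= a e.
  by move=> e0 hx; exact: (sup_upper_bound (Asup e e0)).
have a_pos e : 0 < e -> 0 < a e.
  move=> e0; have [x hx] := An0 e e0; exact: lt_le_trans (proj1 hx) (a_ge e x e0 hx).
have a_mono e e' : 0 < e -> e <= e' -> a e <= a e'.
  move=> e0 ee; apply: sup_le.
  - move=> x [x0 hx]; exists x => //; rewrite /A /=; split => //; lra.
  - exact: An0.
  - by apply: Asup; exact: lt_le_trans ee.
pose B := [set a e | e in `]0, +oo[%classic].
have Binf : has_inf B.
  split; first by exists (a 1); exists 1 => //=; rewrite in_itv /= andbT.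
  by exists 0 => _ [e /= + <-]; rewrite in_itv /= andbT => e0; exact: ltW (a_pos e e0).
pose s := inf B.
have s_le e : 0 < e -> s <= a e.
  by move=> e0; apply: (ge_inf (proj2 Binf)); exists e => //=; rewrite in_itv /= andbT.
exists (- s) => y y0.
apply: le_eps => eps eps0.
case: (leP y z) => yz.
  have z10 : 0 < 1 + z by lra.
  pose e := eps / (1 + z).
  have e0 : 0 < e by rewrite divr_gt0.
  have eE : e * (1 + z) = eps by rewrite /e mulrVK // unitfE gt_eqF.
  have [x [x0 hx] xa] := sup_adherent e0 (Asup e e0).
  have hs := s_le e e0.
  have xa' : a e - e < x := xa.
  have hV := V_ge y0 x0.
  have h1 : (s - e) * (z - y) <= x * (z - y).
    by apply: ler_wpM2r; lra.
  have h2 : e * (z - y) <= e * z by apply: ler_wpM2l; lra.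
  rewrite /V in hx h1 h2 eE hV *.
  have ex1 : x * (z - y) = x * z - x * y by rewrite mulrBr.
  have ex2 : (s - e) * (z - y) = s * z - s * y - e * z + e * y by rewrite mulrBr !mulrBl; lra.
  have ex3 : e * (z - y) = e * z - e * y by rewrite mulrBr.
  have ex4 : - s * (y - z) = s * z - s * y by rewrite mulrBr mulNr mulNr; lra.
  have ex5 : e * (1 + z) = e + e * z by rewrite mulrDr mulr1.
  rewrite ex4; lra.
have y10 : 0 < 1 + y by lra.
pose e' := eps / (1 + y).
have e'0 : 0 < e' by rewrite divr_gt0.
have eE : e' * (1 + y) = eps by rewrite /e' mulrVK // unitfE gt_eqF.
have [_ [e1 /= + <-] ha] := inf_adherent e'0 Binf.
rewrite in_itv /= andbT => e10.
pose e := Num.min e1 e'.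
have e0 : 0 < e by rewrite lt_min e10 e'0.
have [x [x0 hx]] := An0 e e0.
have xa : x <= a e1.
  apply: le_trans (a_ge e x e0 (conj x0 hx)) _.
  by apply: a_mono => //; rewrite ge_min lexx.
have ee' : e <= e' by rewrite ge_min lexx orbT.
have hV := V_ge y0 x0.
have h1 : x * (y - z) <= (s + e') * (y - z).
  by apply: ler_wpM2r; lra.
rewrite /V in hx h1 eE hV *.
have ex1 : x * (y - z) = x * y - x * z by rewrite mulrBr.
have ex2 : (s + e') * (y - z) = s * y - s * z + e' * y - e' * z by rewrite mulrBr !mulrDl; lra.
have ex4 : - s * (y - z) = s * z - s * y by rewrite mulrBr mulNr mulNr; lra.
have ex5 : e' * (1 + y) = e' + e' * y by rewrite mulrDr mulr1.
have h3 : 0 <= e' * z by rewrite mulr_ge0 // ltW.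
rewrite ex4; lra.
Qed.

End VF.

Lemma U_pos (R : realType) (U : R -> R) : utility U -> exists2 x : R, 0 < x & 0 < U x.
Proof.
case=> _ [Umono [_ [Uinf _]]].
apply: contrapT => H.
have H' : forall x : R, 0 < x -> U x <= 0.
  move=> x x0; rewrite leNgt; apply/negP => Ux.
  by apply: H; exists x.
pose U' x := U (Num.max x 1).
have U'nd : {homo U' : n m / n <= m}.
  move=> n m nm; apply: Umono; first by rewrite lt_max ltr01 orbT.
  by rewrite ge_max; apply/andP; split; rewrite le_max ?nm ?lexx ?orbT.
have U'ub : has_ubound (range U').
  by exists 0 => _ [x _ <-]; apply: H'; rewrite lt_max ltr01 orbT.
have cU' := nondecreasing_cvgr U'nd U'ub.
set l := sup (range U') in cU'.
have l0 : l <= 0.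
  apply: ge_sup; first by exists (U' 0), 0.
  by move=> _ [x _ <-]; apply: H'; rewrite lt_max ltr01 orbT.
have cU : U x @[x --> +oo] --> l.
  apply: cvg_trans cU'; apply: near_eq_cvg; near=> x.
  rewrite /U' max_l //; apply: ltW; near: x; exact: nbhs_pinfty_gt.
have cUE : (U x)%:E @[x --> +oo] --> l%:E.
  by apply: cvg_EFin; [by near=> x|exact: cU].
move: Uinf; rewrite (cvg_lim _ cUE) // lte_fin; lra.
Unshelve. all: by end_near.
Qed.

Lemma le_fine_aux (R : realType) (x : R) (u : \bar R) :
  (x%:E <= u)%E -> (u < +oo)%E -> x <= fine u.
Proof. by case: u => [r| |] //=; rewrite ?lee_fin ?leeNy_eq. Qed.

Lemma EAE_bound (R : realType) (V : R -> R) : (EAE V < +oo)%E ->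
  exists2 d1 : R, 0 < d1 & exists C : R, forall y q, 0 < y -> y < d1 ->
    subdiff V y q -> `|q| * y / V y <= C.
Proof.
move=> /ereal_inf_lt [_ [d /= + <-] Hd]; rewrite in_itv /= andbT => d0.
exists d => //; exists (fine (ereal_sup [set ereal_sup
        [set (`|q| * y / V y)%:E | q in subdiff V y] | y in `]0, d[%classic])).
move=> y q y0 yd hq.
set t := ereal_sup _ in Hd *.
have h : ((`|q| * y / V y)%:E <= t)%E.
  apply: (@le_trans _ _ (ereal_sup [set (`|q0| * y / V y)%:E | q0 in subdiff V y])).
    by apply: ereal_sup_ubound; exists q.
  by apply: ereal_sup_ubound; exists y => //=; rewrite in_itv /= y0 yd.
exact: le_fine_aux h Hd.
Qed.

Lemma doubling (R : realType) (U : R -> R) : utility U ->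
  (EAE (conj_V U) < +oo)%E ->
  exists d : R, exists r : R, [/\ 0 < d, 0 < r, r < 1,
    (forall e, 0 < e -> e < d -> 0 < conj_V U e) &
    (forall e, 0 < e -> r * e < d -> conj_V U (r * e) <= 2 * conj_V U e)].
Proof.
move=> Uu hE.
have [x1 x10 Ux1] := U_pos Uu.
case: Uu => _ [Umono [_ [_ Ulin]]].
have [d1 d10 [C HC]] := EAE_bound hE.
pose d0 := U x1 / x1.
have d00 : 0 < d0 by rewrite divr_gt0.
have Vpos e : 0 < e -> e < d0 -> 0 < conj_V U e.
  move=> e0 ed; apply: lt_le_trans (V_ge Umono Ulin e0 x10).
  move: ed; rewrite /d0 ltr_pdivlMr // => h; rewrite subr_gt0 mulrC //.
pose d := Num.min d0 d1.
pose C' := Num.max C 1.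
have C'0 : 0 < C' by rewrite lt_max ltr01 orbT.
have CC : C <= C' by rewrite le_max lexx.
pose r := 2 * C' / (2 * C' + 1).
have r0 : 0 < r by rewrite divr_gt0 // ?mulr_gt0 //; lra.
have r1 : r < 1 by rewrite ltr_pdivrMr; lra.
exists d, r; split => //.
- by rewrite lt_min d00.
- by move=> e e0 ed; apply: Vpos => //; apply: lt_le_trans ed _; rewrite ge_min lexx.
move=> e e0 rd.
have z0 : 0 < r * e by rewrite mulr_gt0.
have [q hq] := V_subdiff Umono Ulin z0.
have dd1 : d <= d1 by rewrite ge_min lexx orbT.
have hb := HC _ _ z0 (lt_le_trans rd dd1) hq.
have Vz0 : 0 < conj_V U (r * e).
  by apply: Vpos => //; apply: lt_le_trans rd _; rewrite ge_min lexx.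
have hb' : `|q| * (r * e) <= C' * conj_V U (r * e).
  by rewrite -ler_pdivrMr //; apply: le_trans hb CC.
have hs := hq e e0.
have e1 : e - r * e = (r * e) / (2 * C').
  rewrite /r; field; apply/andP; split; apply/eqP; lra.
have hn : - q * (e - r * e) <= `|q| * (e - r * e).
  apply: ler_wpM2r; first by rewrite e1 divr_ge0 // ?ltW // mulr_gt0.
  by rewrite -normrN ler_norm.
have h2 : `|q| * (e - r * e) <= conj_V U (r * e) / 2.
  rewrite e1 mulrA ler_pdivrMr ?mulr_gt0 //.
  have -> : conj_V U (r * e) / 2 * (2 * C') = C' * conj_V U (r * e).
    by field.
  exact: hb'.
have hq' : q * (e - r * e) = - (- q * (e - r * e)) by rewrite mulNr opprK.
lra.
Qed.


Fixpoint stepf (R : realType) (tt : R -> R) (dd rr b : R) (k j : nat) (e : R) : R :=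
  if k is k'.+1 then
    (if e < dd * rr ^+ j.+1 then stepf tt dd rr b k' j.+1 e else tt (dd * rr ^+ j))
  else b.

Lemma stepf_spec (R : realType) (tt : R -> R) (dd rr b : R) k : forall j e,
  e < dd * rr ^+ j -> dd * rr ^+ (j + k) <= e ->
  exists m, [/\ stepf tt dd rr b k j e = tt (dd * rr ^+ m),
     dd * rr ^+ m.+1 <= e & e < dd * rr ^+ m].
Proof.
elim: k => [|k IH] j e h1 h2 /=.
  by rewrite addn0 in h2; move: (lt_le_trans h1 h2); rewrite ltxx.
case: ifP => h3.
  by apply: IH => //; rewrite addSnnS.
by exists j; split => //; rewrite leNgt h3.
Qed.

Lemma stepf_meas (R : realType) (tt : R -> R) (dd rr b : R) k : forall j,
  measurable_fun setT (stepf tt dd rr b k j).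
Proof.
elim: k => [|k IH] j /=; first exact: measurable_cst.
apply: measurable_fun_ifT; [|exact: IH|exact: measurable_cst].
by apply: measurable_fun_ltr; [exact: measurable_id | exact: measurable_cst].
Qed.

Lemma stepf_pos (R : realType) (tt : R -> R) (dd rr b : R) k :
  0 < b -> (forall m, 0 < tt (dd * rr ^+ m)) ->
  forall j e, 0 < stepf tt dd rr b k j e.
Proof.
move=> b0 ht; elim: k => [|k IH] j e //=.
by case: ifP.
Qed.

Lemma aux_ee (R : realType) (A B : \bar R) (a k : R) : B \is a fin_num ->
  (a%:E + B <= A + k%:E)%E -> ((a - k)%:E + B <= A)%E.
Proof.
case: B => [b| |] // _; case: A => [x| |] //=.
- by rewrite -!EFinD !lee_fin => h; lra.
- by move=> _; rewrite leey.
Qed.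

Section Prob.
Variables (R : realType) (d : measure_display) (Omega : measurableType d).
Variable (P : probability Omega R).
Variables (U : R -> R) (Z : Omega -> R).
Hypothesis Umono : forall x y : R, 0 < x -> x <= y -> U x <= U y.
Hypothesis Ulin : (fun x : R => U x / x) @ +oo%R --> (0:R).
Hypothesis Zpos : forall w, 0 < Z w.
Hypothesis mZ : measurable_fun setT Z.

Lemma mV y : 0 < y -> measurable_fun setT (fun w => conj_V U (y * Z w)).
Proof.
move=> y0.
have -> : (fun w => conj_V U (y * Z w)) =
    (fun s => conj_V U (expR s)) \o (@ln R \o (fun w => y * Z w)).
  by apply/funext => w /=; rewrite lnK // posrE mulr_gt0.
apply: measurableT_comp; last apply: measurableT_comp.
- apply: nonincreasing_measurable => // s t st.
  by apply: (V_noninc Umono Ulin) => //; [exact: expR_gt0 | rewrite ler_expR].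
- exact: measurable_ln.
- by apply: measurable_funM => //; exact: measurable_cst.
Qed.

Lemma mUf (f : Omega -> R) : measurable_fun setT f -> (forall w, 0 < f w) ->
  measurable_fun setT (fun w => U (f w)).
Proof.
move=> mf f0.
have -> : (fun w => U (f w)) = (fun s => U (expR s)) \o (@ln R \o f).
  by apply/funext => w /=; rewrite lnK // posrE.
apply: measurableT_comp; last apply: measurableT_comp => //.
- apply: nondecreasing_measurable => // s t st.
  by apply: Umono; [exact: expR_gt0 | rewrite ler_expR].
Qed.

Lemma mVp y : 0 < y ->
  measurable_fun setT (fun w => (Num.max (conj_V U (y * Z w)) 0)%:E).
Proof.
move=> y0; apply/measurable_EFinP.
apply: measurable_maxr; [exact: mV | exact: measurable_cst].
Qed.

Lemma int_le_lin (g1 g2 g3 : Omega -> R) (a a' k : R) : 0 <= a -> 0 <= a' -> 0 <= k ->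
  measurable_fun setT g1 -> measurable_fun setT g2 -> measurable_fun setT g3 ->
  (forall w, 0 <= g1 w) -> (forall w, 0 <= g2 w) -> (forall w, 0 <= g3 w) ->
  (forall w, g1 w <= a * g2 w + a' * g3 w + k) ->
  (\int[P]_w (g1 w)%:E <= a%:E * \int[P]_w (g2 w)%:E + a'%:E * \int[P]_w (g3 w)%:E + k%:E)%E.
Proof.
move=> a0 a'0 k0 m1 m2 m3 p1 p2 p3 h.
have mE (g : Omega -> R) : measurable_fun setT g -> measurable_fun setT (fun w => (g w)%:E).
  by move=> mg; apply/measurable_EFinP.
have mA : measurable_fun setT (fun w => a%:E * (g2 w)%:E)%E.
  by apply: emeasurable_funM; [exact: measurable_cst | exact: mE].
have mA' : measurable_fun setT (fun w => a'%:E * (g3 w)%:E)%E.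
  by apply: emeasurable_funM; [exact: measurable_cst | exact: mE].
have mAA : measurable_fun setT (fun w => a%:E * (g2 w)%:E + a'%:E * (g3 w)%:E)%E.
  exact: emeasurable_funD.
have mK : measurable_fun setT (fun w : Omega => k%:E) by exact: measurable_cst.
apply: (@le_trans _ _ (\int[P]_w ((a%:E * (g2 w)%:E + a'%:E * (g3 w)%:E) + k%:E))%E).
  apply: ge0_le_integral => //.
  - by move=> w _; rewrite lee_fin.
  - exact: mE.
  - exact: emeasurable_funD.
  - by move=> w _; rewrite -!EFinM -!EFinD lee_fin.
rewrite ge0_integralD //; try (by move=> w _; rewrite -?EFinM -?EFinD lee_fin ?addr_ge0 ?mulr_ge0).
rewrite ge0_integralD //; try (by move=> w _; rewrite -?EFinM -?EFinD lee_fin ?addr_ge0 ?mulr_ge0).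
rewrite ge0_integralZl //; last by move=> w _; rewrite lee_fin.
  rewrite ge0_integralZl //; last by move=> w _; rewrite lee_fin.
    rewrite integral_cst //; apply: leeD => //.
    rewrite -[X in (_ <= X)%E]mule1; apply: lee_pmul => //.
    exact: probability_le1.
  exact: mE.
exact: mE.
Qed.

Lemma Uext_le x e : 0 <= x -> 0 < e ->
  (Uext U x <= (conj_V U e + x * e)%:E)%E.
Proof.
move=> x0 e0; rewrite /Uext; case: ifP => xp.
  by rewrite lee_fin; have := V_ge Umono Ulin e0 xp; lra.
have x00 : x = 0 by apply/eqP; rewrite eq_le x0 andbT leNgt xp.
subst x; rewrite mul0r addr0.
have hc := @nondecreasing_at_right_cvge R (fun z => (U z)%:E) 0 (+oo%O) erefl.
rewrite (cvg_lim _ (hc _)) //; last first.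
  move=> a b; rewrite !in_itv /= !andbT => a0 _ ab; rewrite lee_fin.
  exact: Umono.
apply/lee_addgt0Pr => t t0.
have te0 : 0 < t / e by rewrite divr_gt0.
apply: le_trans (ereal_inf_lbound _) _; first by exists (t / e) => //=; rewrite in_itv /= te0.
rewrite -EFinD lee_fin; have := V_ge Umono Ulin e0 te0.
by rewrite divfK ?gt_eqF //; lra.
Qed.

Lemma dir1 (ZT : Omega -> R) : ZT = Z ->
  (forall y, 0 < y -> EV_finite P U ZT y) ->
  exists x, 0 < x /\ (value_u P ZT x U < +oo)%E.
Proof.
move=> -> H; exists 1; split => //.
have h1 := H 1 ltr01; rewrite /EV_finite in h1.
set B := (\int[P]_w (Num.max (conj_V U (1 * Z w)) 0)%:E)%E in h1.
apply: (@le_lt_trans _ _ (B + 1%:E)%E); last first.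
  by rewrite lte_add_pinfty // ltry.
apply: ge_ereal_sup => _ [f [mf [f0 hf]] <-].
rewrite /EU; case: ifP => hneg; last by rewrite leNye.
have mUe : measurable_fun setT (fun w => Uext U (f w)).
  have -> : (fun w => Uext U (f w)) = (fun w => if 0 < f w then (U (expR (ln (f w))))%:E
                     else lim ((fun z : R => (U z)%:E) @ 0^'+)).
    apply/funext => w; rewrite /Uext; case: ifP => // fp.
    by rewrite lnK // posrE.
  apply: measurable_fun_ifT.
  - by apply: measurable_fun_ltr => //; exact: measurable_cst.
  - apply/measurable_EFinP; apply: mUf.
      apply: measurableT_comp; first exact: measurable_expR.
      by apply: measurableT_comp; [exact: measurable_ln | exact: mf].
    by move=> w; exact: expR_gt0.
  - exact: measurable_cst.
have hpos : (\int[P]_w ((fun w => Uext U (f w))^\+ w) <= B + 1%:E)%E.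
  apply: (@le_trans _ _ (\int[P]_w ((Num.max (conj_V U (1 * Z w)) 0)%:E + (Z w * f w)%:E))%E).
    have p1 : forall w, [set: Omega] w -> (0 <= (fun w => Uext U (f w))^\+ w)%E.
      by move=> w _; exact: funepos_ge0.
    have m1 := measurable_funepos mUe.
    have m2 : measurable_fun setT (fun w => (Num.max (conj_V U (1 * Z w)) 0)%:E + (Z w * f w)%:E)%E.
      apply: emeasurable_funD; first exact: mVp.
      by apply/measurable_EFinP; exact: measurable_funM.
    apply: (ge0_le_integral _ _ p1 m1 m2) => // w _.
    rewrite funeposE mul1r.
    have := Uext_le (f0 w) (Zpos w).
    move=> h; rewrite ge_max; apply/andP; split.
      apply: le_trans h _; rewrite -EFinD lee_fin mulrC lerD2r le_max lexx //.
    by rewrite -EFinD lee_fin addr_ge0 // ?le_max ?lexx ?orbT // mulr_ge0 // ltW.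
  rewrite ge0_integralD //.
  - by rewrite leeD2l.
  - by move=> w _; rewrite lee_fin le_max lexx orbT.
  - exact: mVp.
  - by move=> w _; rewrite lee_fin mulr_ge0 // ltW.
  - by apply/measurable_EFinP; exact: measurable_funM.
apply: le_trans hpos; rewrite leeBlDr; last first.
  rewrite ge0_fin_numE //; apply: integral_ge0 => w _; exact: funeneg_ge0.
by rewrite leeDl //; apply: integral_ge0 => w _; exact: funeneg_ge0.
Qed.

Lemma EU_lb (f g : Omega -> R) (i k : R) : measurable_fun setT f -> (forall w, 0 < f w) ->
  measurable_fun setT g -> (forall w, 0 <= g w) -> 0 <= k ->
  (\int[P]_w (g w)%:E = i%:E)%E ->
  (forall w, g w / 2 - k <= U (f w)) ->
  ((i / 2 - k)%:E <= EU P U f)%E.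
Proof.
move=> mf f0 mg g0 k0 hi hU.
have eqU : (fun w => Uext U (f w)) = (fun w => (U (f w))%:E).
  by apply/funext => w; rewrite /Uext f0.
have mu : measurable_fun setT (fun w => U (f w)) by exact: mUf.
pose up w := Num.max (U (f w)) 0.
pose um w := Num.max (- U (f w)) 0.
have eup : ((fun w => Uext U (f w))^\+)%E = (fun w => (up w)%:E).
  by apply/funext => w; rewrite funeposE /Uext f0 /up EFin_max.
have eum : ((fun w => Uext U (f w))^\-)%E = (fun w => (um w)%:E).
  by apply/funext => w; rewrite funenegE /Uext f0 /um -EFinN EFin_max.
have mup : measurable_fun setT up.
  by apply: measurable_maxr => //; exact: measurable_cst.
have mum : measurable_fun setT um.
  apply: measurable_maxr; last exact: measurable_cst.
  by apply: measurableT_comp => //; exact: measurable_oppr.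
have up0 w : 0 <= up w by rewrite le_max lexx orbT.
have um0 w : 0 <= um w by rewrite le_max lexx orbT.
have mE (h : Omega -> R) : measurable_fun setT h -> measurable_fun setT (fun w => (h w)%:E).
  by move=> mh; apply/measurable_EFinP.
have hneg : (\int[P]_w (um w)%:E <= k%:E)%E.
  apply: le_trans.
    apply: (@int_le_lin um (fun _ => 0) (fun _ => 0) 0 0 k) => //;
      try exact: measurable_cst.
    move=> w; rewrite mul0r !add0r ge_max k0 andbT.
    have := hU w; have := g0 w; lra.
  by rewrite !mul0e !add0e.
have negfin : (\int[P]_w (um w)%:E)%E \is a fin_num.
  rewrite ge0_fin_numE; first exact: le_lt_trans hneg (ltry _).
  by apply: integral_ge0 => w _; rewrite lee_fin.
rewrite /EU eum eup ifT; last exact: le_lt_trans hneg (ltry _).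
rewrite leeBrDr //.
have key : (\int[P]_w ((g w / 2 + um w)%:E) <= \int[P]_w ((up w + k)%:E))%E.
  apply: ge0_le_integral => //.
  - by move=> w _; rewrite lee_fin addr_ge0 // divr_ge0.
  - apply: mE; apply: measurable_funD => //.
    by apply: measurable_funM => //; exact: measurable_cst.
  - by apply: mE; apply: measurable_funD => //; exact: measurable_cst.
  - move=> w _; rewrite lee_fin /up /um.
    have := hU w; have := g0 w.
    by case: (leP 0 (U (f w))) => h0; case: (leP 0 (- U (f w))) => h2; lra.
have eg : (\int[P]_w (g w / 2)%:E = (i / 2)%:E)%E.
  under eq_integral do rewrite EFinM.
  rewrite ge0_integralZr //; try (by rewrite hi -EFinM); try (by rewrite eg); try (by rewrite integral_cst); try (by apply: mE); try (by move=> w _; rewrite lee_fin ?divr_ge0); try (by rewrite lee_fin); try exact: measurable_cst; try (by apply: mE; apply: measurable_funM => //; exact: measurable_cst).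
have e1 : (\int[P]_w ((g w / 2 + um w)%:E) = (i / 2)%:E + \int[P]_w (um w)%:E)%E.
  under eq_integral do rewrite EFinD.
  rewrite ge0_integralD //; try (by rewrite hi -EFinM); try (by rewrite eg); try (by rewrite integral_cst); try (by apply: mE); try (by move=> w _; rewrite lee_fin ?divr_ge0); try (by rewrite lee_fin); try exact: measurable_cst; try (by apply: mE; apply: measurable_funM => //; exact: measurable_cst).
have e2 : (\int[P]_w ((up w + k)%:E) = \int[P]_w (up w)%:E + k%:E * P [set: Omega])%E.
  under eq_integral do rewrite EFinD.
  rewrite ge0_integralD //; try (by rewrite hi -EFinM); try (by rewrite eg); try (by rewrite integral_cst); try (by apply: mE); try (by move=> w _; rewrite lee_fin ?divr_ge0); try (by rewrite lee_fin); try exact: measurable_cst; try (by apply: mE; apply: measurable_funM => //; exact: measurable_cst).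
rewrite e1 e2 in key.
have hP : (k%:E * P [set: Omega] <= k%:E)%E.
  rewrite -[X in (_ <= X)%E]mule1; apply: lee_pmul => //.
  exact: probability_le1.
have key2 := le_trans key (leeD2l _ hP).
exact: aux_ee negfin key2.
Qed.

Section Dbl.
Variables (dd rr : R).
Hypotheses (dd0 : 0 < dd) (rr0 : 0 < rr) (rr1 : rr < 1).
Hypothesis Vpos : forall e, 0 < e -> e < dd -> 0 < conj_V U e.
Hypothesis Vdbl : forall e, 0 < e -> rr * e < dd -> conj_V U (rr * e) <= 2 * conj_V U e.

Lemma prop_pt e : 0 < e -> Num.max (conj_V U (rr * e)) 0 <=
  2 * Num.max (conj_V U e) 0 + Num.max (conj_V U dd) 0.
Proof.
move=> e0; have re0 : 0 < rr * e by rewrite mulr_gt0.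
have h1 : 0 <= Num.max (conj_V U dd) 0 by rewrite le_max lexx orbT.
have h2 : conj_V U e <= Num.max (conj_V U e) 0 by rewrite le_max lexx.
have h3 : 0 <= Num.max (conj_V U e) 0 by rewrite le_max lexx orbT.
case: (ltP (rr * e) dd) => hd.
  have := Vdbl e0 hd; have := Vpos re0 hd => p q.
  rewrite ge_max; apply/andP; split; lra.
have := V_noninc Umono Ulin dd0 hd => q.
have h4 : conj_V U dd <= Num.max (conj_V U dd) 0 by rewrite le_max lexx.
rewrite ge_max; apply/andP; split; lra.
Qed.

Lemma fin_prop y : 0 < y -> EV_finite P U Z y -> EV_finite P U Z (rr * y).
Proof.
move=> y0 h; rewrite /EV_finite.
have ry0 : 0 < rr * y by rewrite mulr_gt0.
apply: le_lt_trans.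
  apply: (@int_le_lin (fun w => Num.max (conj_V U (rr * y * Z w)) 0)
     (fun w => Num.max (conj_V U (y * Z w)) 0) (fun _ => 0) 2 0
     (Num.max (conj_V U dd) 0)) => //; try (by rewrite le_max lexx orbT);
    try (by move=> w; rewrite le_max lexx orbT);
    try (by apply: measurable_maxr; [exact: mV | exact: measurable_cst]).
  move=> w; rewrite mul0r addr0 -mulrA; apply: prop_pt.
    by rewrite mulr_gt0.
rewrite mul0e adde0; apply: lte_add_pinfty; last exact: ltry.
rewrite lte_mul_pinfty //.
Qed.

Lemma fin_all y0 : 0 < y0 -> EV_finite P U Z y0 ->
  forall y, 0 < y -> EV_finite P U Z y.
Proof.
move=> y00 h.
have hk : forall k, EV_finite P U Z (rr ^+ k * y0).
  elim=> [|k IH]; first by rewrite expr0 mul1r.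
  rewrite exprS -mulrA; apply: fin_prop => //.
  by rewrite mulr_gt0 // exprn_gt0.
move=> y y1.
have ar : `|rr| < 1 by rewrite gtr0_norm.
have yy0 : 0 < y / y0 by rewrite divr_gt0.
have := cvg_expr ar; move/cvgrPdist_lt => /(_ _ yy0) [N _ HN].
have := HN N (leqnn N); rewrite /= sub0r normrN gtr0_norm ?exprn_gt0 //.
rewrite ltr_pdivlMr // => hN.
have hN0 : 0 < rr ^+ N * y0 by rewrite mulr_gt0 // exprn_gt0.
move: (hk N); rewrite /EV_finite; apply: le_lt_trans.
apply: le_trans.
  apply: (@int_le_lin (fun w => Num.max (conj_V U (y * Z w)) 0)
     (fun w => Num.max (conj_V U (rr ^+ N * y0 * Z w)) 0) (fun _ => 0) 1 0 0) => //;
    try (by move=> w; rewrite le_max lexx orbT);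
    try (by apply: measurable_maxr; [exact: mV | exact: measurable_cst]).
  move=> w; rewrite mul0r !addr0 mul1r.
  rewrite ge_max; apply/andP; split; last by rewrite le_max lexx orbT.
  rewrite le_max; apply/orP; left.
  apply: (V_noninc Umono Ulin) => //; first by rewrite mulr_gt0.
  by rewrite ler_pM2r // ltW.
by rewrite mul0e !adde0 mul1e.
Qed.

Definition ttc (e : R) : R :=
  match pselect (exists t, 0 < t /\ conj_V U e - 1 < U t - t * e) with
  | left h => sval (cid h)
  | right _ => 1
  end.

Lemma ttc_spec e : 0 < e -> 0 < ttc e /\ conj_V U e - 1 < U (ttc e) - ttc e * e.
Proof.
move=> e0; rewrite /ttc; case: pselect => [h|h]; first exact: svalP (cid h).
exfalso; apply: h; have [x x0 hx] := V_adh Umono Ulin e0 ltr01.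
by exists x.
Qed.

Definition G y s w := if Z w < s then 0 else Num.max (conj_V U (y * Z w)) 0.

Lemma mG y s : 0 < y -> measurable_fun setT (G y s).
Proof.
move=> y0; apply: measurable_fun_ifT.
- by apply: measurable_fun_ltr => //; exact: measurable_cst.
- exact: measurable_cst.
- by apply: measurable_maxr; [exact: mV | exact: measurable_cst].
Qed.

Lemma G_ge0 y s w : 0 <= G y s w.
Proof. by rewrite /G; case: ifP => // _; rewrite le_max lexx orbT. Qed.

Section Constr.
Variables (x0 M : R).
Hypothesis x00 : 0 < x0.
Hypothesis HM : forall f, Cset P Z x0 f -> forall a : R, (a%:E <= EU P U f)%E -> a <= M.
Hypothesis iZ : (\int[P]_w (Z w)%:E < +oo)%E.

Definition IZ := fine (\int[P]_w (Z w)%:E)%E.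
Definition bb := x0 / (2 * (IZ + 1)).
Definition KK := Num.max (conj_V U dd) 0.
Definition kap := 1 + `|U bb| + KK.
Definition cc := (1 - rr)^-1.

Lemma IZ_ge0 : 0 <= IZ.
Proof. by apply: fine_ge0; apply: integral_ge0 => w _; rewrite lee_fin ltW. Qed.

Lemma IZE : (\int[P]_w (Z w)%:E)%E = IZ%:E.
Proof.
rewrite /IZ fineK // ge0_fin_numE //.
by apply: integral_ge0 => w _; rewrite lee_fin ltW.
Qed.

Lemma bb_gt0 : 0 < bb.
Proof. by rewrite /bb divr_gt0 // mulr_gt0 //; have := IZ_ge0; lra. Qed.

Lemma bbIZ : bb * IZ <= x0 / 2.
Proof.
have h := IZ_ge0.
have h1 : IZ + 1 != 0 by rewrite gt_eqF //; lra.
rewrite /bb (_ : x0 / (2 * (IZ + 1)) * IZ = x0 / 2 * (IZ / (IZ + 1))); last by field.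
apply: ler_piMr; first by rewrite divr_ge0 // ltW.
by rewrite ler_pdivrMr; lra.
Qed.

Lemma cc_gt0 : 0 < cc.
Proof. by rewrite /cc invr_gt0 subr_gt0. Qed.

Lemma Ibig y s i : 0 < y -> 0 < s ->
  (\int[P]_w (G y s w)%:E = i%:E)%E -> cc * (i + 1) <= y * (x0 / 2) ->
  i <= 2 * (M + kap).
Proof.
move=> y0 s0 hi hb.
have dys : 0 < y * s / dd by rewrite divr_gt0 // mulr_gt0.
have ar : `|rr| < 1 by rewrite gtr0_norm.
have := cvg_expr ar; move/cvgrPdist_lt => /(_ _ dys) [N _ HN].
have := HN N (leqnn N); rewrite /= sub0r normrN gtr0_norm ?exprn_gt0 //.
rewrite ltr_pdivlMr // => hN.
pose f w := if Z w < s then bb else if y * Z w < dd then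
   stepf ttc dd rr bb N 0 (y * Z w) else bb.
have b0 := bb_gt0.
have f0 : forall w, 0 < f w.
  move=> w; rewrite /f; case: ifP => // _; case: ifP => // _.
  apply: stepf_pos => // m; apply: (proj1 (ttc_spec _)).
  by rewrite mulr_gt0 // exprn_gt0.
have mf : measurable_fun setT f.
  apply: measurable_fun_ifT.
  - by apply: measurable_fun_ltr => //; exact: measurable_cst.
  - exact: measurable_cst.
  apply: measurable_fun_ifT.
  - apply: measurable_fun_ltr; last exact: measurable_cst.
    by apply: measurable_funM => //; exact: measurable_cst.
  - apply: measurableT_comp; first exact: stepf_meas.
    by apply: measurable_funM => //; exact: measurable_cst.
  - exact: measurable_cst.
have c0 := cc_gt0.
have cy0 : 0 < cc / y by rewrite divr_gt0.
have K0 : 0 <= KK by rewrite le_max lexx orbT.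
have nUb : - `|U bb| <= U bb by rewrite lerNl -normrN; exact: ler_norm.
have kap1 : 1 + `|U bb| <= kap by rewrite /kap lerDl.
have pw : forall w, Z w * f w <= cc / y * G y s w + bb * Z w + cc / y /\
                    G y s w / 2 - kap <= U (f w).
  move=> w; have Zw := Zpos w; have Gw := G_ge0 y s w.
  have bZ : 0 <= bb * Z w by rewrite mulr_ge0 // ltW.
  have cG : 0 <= cc / y * G y s w by rewrite mulr_ge0 // ltW.
  move: Gw cG; rewrite /f /G; case: ifP => hs Gw cG.
    split; first by rewrite mulrC; lra.
    by rewrite mul0r; lra.
  have hsZ : s <= Z w by rewrite leNgt hs.
  have eta0 : 0 < y * Z w by rewrite mulr_gt0.
  case: ifP => hd.
  - have h1 : y * Z w < dd * rr ^+ 0 by rewrite expr0 mulr1.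
    have h2 : dd * rr ^+ (0 + N) <= y * Z w.
      rewrite add0n mulrC; apply: le_trans (ltW hN) _.
      by rewrite ler_pM2l.
    have [m [-> hm1 hm2]] := stepf_spec ttc bb h1 h2.
    set e := dd * rr ^+ m in hm1 hm2 *.
    have e0 : 0 < e by rewrite mulr_gt0 // exprn_gt0.
    have ed : e <= dd by rewrite /e; apply: ler_piMr; [exact: ltW | apply: exprn_ile1; exact: ltW].
    have re : rr * e = dd * rr ^+ m.+1 by rewrite /e exprS mulrCA.
    have re0 : 0 < rr * e by rewrite mulr_gt0.
    have red : rr * e < dd.
      by apply: lt_le_trans ed; rewrite gtr_pMl.
    have [t0 ht] := ttc_spec e0.
    set t := ttc e in t0 ht *.
    have hdb := Vdbl e0 red.
    have hge := V_ge Umono Ulin re0 t0.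
    have hv1 : conj_V U (y * Z w) <= conj_V U (rr * e).
      by apply: (V_noninc Umono Ulin) => //; rewrite re.
    have hv2 : conj_V U e <= conj_V U (y * Z w).
      by apply: (V_noninc Umono Ulin) => //; exact: ltW.
    have hp := Vpos eta0 hd.
    rewrite max_l; last exact: ltW.
    have te0 : 0 < t * e by rewrite mulr_gt0.
    split.
      have hq : e * t * (1 - rr) <= conj_V U e + 1.
        have : e * t * (1 - rr) = (U t - t * (rr * e)) - (U t - t * e).
          by rewrite mulrBr mulr1 mulrCA mulrA; ring.
        move=> ->; lra.
      have hq' : e * t <= cc * (conj_V U e + 1).
        by rewrite /cc [_^-1 * _]mulrC ler_pdivlMr ?subr_gt0 //; lra.
      have ht2 : y * Z w * t <= e * t by rewrite ler_pM2r // ltW.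
      have hZ : Z w * t = (y * Z w * t) / y by field; rewrite gt_eqF.
      rewrite hZ.
      have : y * Z w * t / y <= cc * (conj_V U (y * Z w) + 1) / y.
        rewrite ler_pM2r ?invr_gt0 //.
        apply: le_trans ht2 (le_trans hq' _).
        by rewrite ler_pM2l //; lra.
      have -> : cc * (conj_V U (y * Z w) + 1) / y =
        cc / y * conj_V U (y * Z w) + cc / y by field; rewrite gt_eqF.
      lra.
    have : U t > conj_V U e - 1 by lra.
    have := normr_ge0 (U bb); lra.
  - have hdd : dd <= y * Z w by rewrite leNgt hd.
    have hv := V_noninc Umono Ulin dd0 hdd.
    have hG : Num.max (conj_V U (y * Z w)) 0 <= KK.
      rewrite /KK ge_max le_max hv /= le_max lexx orbT //.
    split; first by rewrite mulrC; lra.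
    have kE : kap = 1 + `|U bb| + KK by []. have := normr_ge0 (U bb); lra.
have hC : Cset P Z x0 f.
  split; first exact: mf.
  split; first by move=> w; exact: ltW.
  apply: le_trans.
    apply: (@int_le_lin (fun w => Z w * f w) (G y s) Z (cc / y) bb (cc / y)) => //;
      try exact: ltW; try exact: G_ge0; try exact: mG; try exact: measurable_funM;
      try (by move=> w; rewrite mulr_ge0 // ltW); try (by move=> w; rewrite ltW);
      try (by move=> w; exact: (proj1 (pw w))).
  rewrite hi IZE -!EFinM -!EFinD lee_fin.
  have := bbIZ.
  have : cc / y * i + cc / y <= x0 / 2.
    have -> : cc / y * i + cc / y = cc * (i + 1) / y by field; rewrite gt_eqF.
    by rewrite ler_pdivrMr // [_ * y]mulrC.
  lra.
have kap0 : 0 <= kap by apply: le_trans kap1; rewrite addr_ge0.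
have hEU := EU_lb mf f0 (mG s y0) (@G_ge0 y s) kap0 hi
  (fun w => proj2 (pw w)).
have := HM hC hEU; lra.
Qed.

Definition K1 := Num.max (conj_V U 1) 0.
Definition LL := Num.max K1 (4 * (M + kap) + KK) + 1.
Definition y0 := 2 * cc * (LL + 1) / x0 + 1.

Lemma y0_gt0 : 0 < y0.
Proof.
have h : 0 <= 2 * cc * (LL + 1) / x0.
  rewrite divr_ge0 ?mulr_ge0 ?ltW //; first exact: cc_gt0.
  rewrite /LL; have : 0 <= Num.max K1 (4 * (M + kap) + KK).
    have hK1 : 0 <= K1 by rewrite /K1 le_max lexx orbT.
    by rewrite le_max hK1.
  lra.
by rewrite /y0; lra.
Qed.

Lemma G_le_s y s w : 0 < y -> 0 < s ->
  G y s w <= Num.max (conj_V U (y * s)) 0.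
Proof.
move=> y0' s0; rewrite /G; case: ifP => hs; first by rewrite le_max lexx orbT.
rewrite ge_max; apply/andP; split; last by rewrite le_max lexx orbT.
rewrite le_max; apply/orP; left.
apply: (V_noninc Umono Ulin); first by rewrite mulr_gt0.
by rewrite ler_pM2l // leNgt hs.
Qed.

Lemma G_prop y s w : 0 < y -> G (rr * y) s w <= 2 * G y s w + KK.
Proof.
move=> y0'; rewrite /G; case: ifP => _.
  by rewrite mulr0 add0r le_max lexx orbT.
by rewrite -mulrA; apply: prop_pt; rewrite mulr_gt0.
Qed.

Lemma walk s : 0 < s -> (\int[P]_w (G y0 s w)%:E <= LL%:E)%E.
Proof.
move=> s0.
pose I y := (\int[P]_w (G y s w)%:E)%E.
have Ig0 y : (0 <= I y)%E by apply: integral_ge0 => w _; rewrite lee_fin G_ge0.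
have Ibnd y : 0 < y -> (I y <= (Num.max (conj_V U (y * s)) 0)%:E)%E.
  move=> yp; apply: le_trans.
    apply: (@int_le_lin (G y s) (fun _ => 0) (fun _ => 0) 0 0
      (Num.max (conj_V U (y * s)) 0)) => //;
      try exact: measurable_cst; try exact: mG; try exact: G_ge0.
    - by rewrite le_max lexx orbT.
    - by move=> w; rewrite !mul0r !add0r; exact: G_le_s.
  by rewrite !mul0e !add0e.
have Iprop y : 0 < y -> (I (rr * y)%R <= 2%:E * I y + KK%:E)%E.
  move=> yp; apply: le_trans.
    apply: (@int_le_lin (G (rr * y) s) (G y s) (fun _ => 0) 2 0 KK) => //;
      try exact: measurable_cst; try exact: G_ge0.
    - by rewrite le_max lexx orbT.
    - by apply: mG; rewrite mulr_gt0.
    - exact: mG.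
    - by move=> w; rewrite mul0r addr0; exact: G_prop.
  by rewrite mul0e adde0.
rewrite -/(I y0); rewrite leNgt; apply/negP => hL.
pose yj (j : nat) := y0 / rr ^+ j.
have yj0 j : 0 < yj j by rewrite divr_gt0 ?y0_gt0 // exprn_gt0.
have yjS j : yj j = rr * yj j.+1.
  by rewrite /yj exprS; field; rewrite expf_neq0 ?gt_eqF.
have yjge j : y0 <= yj j.
  rewrite /yj ler_pdivlMr ?exprn_gt0 //; apply: ler_piMr; first exact: ltW y0_gt0.
  by apply: exprn_ile1; exact: ltW.
have hex : exists j, (I (yj j) <= LL%:E)%E.
  have ar : `|rr| < 1 by rewrite gtr0_norm.
  have ys : 0 < y0 * s by rewrite mulr_gt0 ?y0_gt0.
  have := cvg_expr ar; move/cvgrPdist_lt => /(_ _ ys) [N _ HN].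
  have := HN N (leqnn N); rewrite /= sub0r normrN gtr0_norm ?exprn_gt0 // => hN.
  exists N; apply: le_trans (Ibnd _ (yj0 N)) _.
  rewrite lee_fin; apply: le_trans (_ : K1 <= _).
    rewrite /K1 ge_max; apply/andP; split; last by rewrite le_max lexx orbT.
    rewrite le_max; apply/orP; left.
    apply: (V_noninc Umono Ulin) => //.
    rewrite /yj mulrAC ler_pdivlMr ?exprn_gt0 // mul1r; exact: ltW.
  rewrite /LL; have : K1 <= Num.max K1 (4 * (M + kap) + KK) by rewrite le_max lexx.
  lra.
case: (ex_minnP hex) => m hm hmin.
case: m hm hmin => [|m] hm hmin.
  by move: hm; rewrite /yj expr0 divr1 leNgt hL.
have hm' : (LL%:E < I (yj m))%E.
  rewrite ltNge; apply/negP => h; have := hmin m h; by rewrite ltnn.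
have hp := Iprop _ (yj0 m.+1); rewrite -yjS in hp.
have ifin : I (yj m.+1) \is a fin_num.
  by rewrite ge0_fin_numE //; apply: le_lt_trans hm (ltry _).
set i := fine (I (yj m.+1)).
have hiE : I (yj m.+1) = i%:E by rewrite /i fineK.
have hiL : i <= LL by rewrite -lee_fin -hiE.
have hb : cc * (i + 1) <= yj m.+1 * (x0 / 2).
  apply: (@le_trans _ _ (y0 * (x0 / 2))); last first.
    by rewrite ler_pM2r ?divr_gt0.
  have -> : y0 * (x0 / 2) = cc * (LL + 1) + x0 / 2.
    by rewrite /y0; field; rewrite gt_eqF.
  have : cc * (i + 1) <= cc * (LL + 1) by rewrite ler_pM2l ?cc_gt0 //; lra.
  by move=> h; apply: le_trans h _; rewrite lerDl divr_ge0 // ltW.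
have hI := Ibig (yj0 m.+1) s0 hiE hb.
move: hp hm'; rewrite hiE -EFinM -EFinD => hp hm'.
have := lt_le_trans hm' hp; rewrite lte_fin.
have : 4 * (M + kap) + KK <= Num.max K1 (4 * (M + kap) + KK) by rewrite le_max lexx orbT.
rewrite /LL; lra.
Qed.

Lemma key_fin : EV_finite P U Z y0.
Proof.
rewrite /EV_finite.
pose g (n : nat) w := (G y0 (n.+1%:R^-1) w)%:E.
have mg n : measurable_fun setT (g n).
  by apply/measurable_EFinP; apply: mG; exact: y0_gt0.
have g0 n w : (0 <= g n w)%E by rewrite lee_fin G_ge0.
have gnd w : {homo (fun n => g n w) : n m / (n <= m)%N >-> (n <= m)%E}.
  move=> n m nm; rewrite /g /G lee_fin.
  case: ifP => h1; case: ifP => h2 //; rewrite ?le_max ?lexx ?orbT //.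
  exfalso; suff : Z w < n.+1%:R^-1 by rewrite h1.
  apply: (lt_le_trans h2).
  by rewrite lef_pV2 ?posrE // ler_nat ltnS.
have hlim w : limn (fun n => g n w) = (Num.max (conj_V U (y0 * Z w)) 0)%:E.
  apply: lim_near_cst => //.
  have := near_infty_natSinv_lt (PosNum (Zpos w)); apply: filterS => n hn.
  by rewrite /g /G ltNge (ltW hn).
rewrite (_ : (fun w => _) = (fun w => limn (fun n => g n w))); last first.
  by apply/funext => w; rewrite hlim.
rewrite (@monotone_convergence _ _ _ P setT measurableT g (fun n => mg n) (fun n w _ => g0 n w) (fun w _ => gnd w)).
apply: le_lt_trans (ltry LL).
apply: lime_le.
  apply: ereal_nondecreasing_is_cvgn => n m nm.
  apply: (ge0_le_integral _ _ (fun w _ => g0 n w) (mg n) (mg m)) => // w _.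
  exact: gnd.
apply: nearW => n; apply: walk.
by rewrite invr_gt0.
Qed.

End Constr.

End Dbl.

End Prob.

End Aux.
Import Aux.

Theorem lemma3p2 (R : realType) (d : measure_display) (Omega : measurableType d)
  (P : probability Omega R) (T : R) (F : R -> set (set Omega)) (lam : R)
  (S Z0 Z1 : R -> Omega -> R) (U : R -> R) :
  0 < T ->
  usual_conditions P T F ->
  0 < lam < 1 ->
  (forall t w, 0 <= t <= T -> 0 < S t w) ->
  adapted T F S -> cadlag T S ->
  consistent_price_system P T F lam S Z0 Z1 ->
  utility U ->
  (EAE (conj_V U) < +oo)%E ->
  ((forall y, 0 < y -> EV_finite P U (Z0 T) y) <->
   (exists x, 0 < x /\ (value_u P (Z0 T) x U < +oo)%E)).
Proof.
move=> T0 [[Ffilt _] _] _ _ _ _ [Zp [_ [[Zad [Zint _]] _]]] hU hE.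
have TT : 0 <= T <= T by rewrite lexx andbT ltW.
have Zpos : forall w, 0 < Z0 T w by move=> w; exact: (proj1 (Zp T w TT)).
have mZ : measurable_fun setT (Z0 T).
  move=> _ B mB; rewrite setTI.
  exact: (proj2 (Ffilt T TT)) (Zad T TT B mB).
have iZ : (\int[P]_w (Z0 T w)%:E < +oo)%E.
  move: (Zint T TT) => /integrableP [_ hi].
  apply: le_lt_trans hi; apply: ge0_le_integral => //.
  - by move=> w _; rewrite lee_fin ltW.
  - by apply/measurable_EFinP.
  - by apply: measurableT_comp => //; apply/measurable_EFinP.
  - by move=> w _ /=; rewrite lee_fin ler_norm.
have [_ [Umono [_ [_ Ulin]]]] := hU.
split.
  exact: (dir1 Umono Ulin Zpos mZ (erefl _)).
move=> [x0 [x00 hv]].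
have [dd [rr [dd0 rr0 rr1 Vpos Vdbl]]] := doubling hU hE.
set v := value_u P (Z0 T) x0 U in hv.
have HM : forall f, Cset P (Z0 T) x0 f -> forall a : R, (a%:E <= EU P U f)%E -> a <= fine v.
  move=> f hf a ha; apply: le_fine_aux hv.
  apply: le_trans ha _; apply: ereal_sup_ubound; by exists f.
have hk := key_fin Umono Ulin Zpos mZ dd0 rr0 rr1 Vpos Vdbl x00 HM iZ.
apply: (fin_all Umono Ulin Zpos mZ dd0 rr0 rr1 Vpos Vdbl _ hk).
exact: y0_gt0.
Qed.
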